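(* Assume $x\mapsto\mathfrak S(x,z,\xi_i)$ is continuously differentiable for every $z$ and $i$, and define $\Delta_X^{(t)}\equiv\frac1m\sum_{i\in[m]}(\mathrm{id}-\mathbb E^{(0)})X_i\,\mathfrak S(\langle X_i,\mathrm u_X^{(t)}\rangle,\langle X_i,\mu_\ast\rangle,\xi_i)\in\mathbb R^n$. Then for every $t\ge1$, $$\|\mu^{(t)}-\mathrm u_X^{(t)}\|\le\|\eta_{[0:t)}\|_\infty\,\mathfrak M^{(t-1)}_{\mu^{(\cdot)},\mathrm u_X^{(\cdot)}}(X)\max_{s\in[1:t]}\|\Delta_X^{(s-1)}\|.$$
   Context: Let $m,n\ge1$. Let $X\in\mathbb R^{m\times n}$ be a random matrix with rows $X_1,\dots,X_m$; $\mu_\ast\in\mathbb R^n$, $\xi=(\xi_1,\dots,\xi_m)$, $\mathcal F:\mathbb R^2\to\mathbb R$, $Y_i=\mathcal F(\langle X_i,\mu_\ast\rangle,\xi_i)$; $\mathsf L:\mathbb R^2\to\mathbb R$ a loss, $\mathfrak S(x_0,z_0,\xi_0)\equiv\partial_1\mathsf L(x_0,\mathcal F(z_0,\xi_0))$, $\partial_1\mathfrak S$ its derivative in $x_0$. Gradient descent: $\mu^{(t)}=\mu^{(t-1)}-\frac{\eta_{t-1}}{m}X^\top\mathfrak S(X\mu^{(t-1)},X\mu_\ast,\xi)$ (componentwise) with initialization $\mu^{(0)}$ and step sizes $\eta_s>0$. $X$ is independent of $(\mu^{(0)},\mu_\ast,\xi)$ and $\mathbb E^{(0)}$ is expectation conditional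 on $(\mu^{(0)},\mu_\ast,\xi)$ (assume all expectations finite). Theoretical gradient descent: $\mathrm u_X^{(0)}=\mu^{(0)}$, $\mathrm u_X^{(t)}=\mathrm u_X^{(t-1)}-\frac{\eta_{t-1}}{m}\mathbb E^{(0)}X^\top\mathfrak S(X\mathrm u_X^{(t-1)},X\mu_\ast,\xi)$. Let $U\sim\mathrm{Unif}[0,1]$, $\pi_m\sim\mathrm{Unif}\{1,\dots,m\}$ be independent of everything. For $\mathrm u,\mathrm v$: $M_{\mathrm u,\mathrm v}(X)\equiv\mathbb E_{U,\pi_m}\partial_1\mathfrak S(\langle X_{\pi_m},U\mathrm u+(1-U)\mathrm v\rangle,\langle X_{\pi_m},\mu_\ast\rangle,\xi_{\pi_m})X_{\pi_m}X_{\pi_m}^\top$ (expectation over $U,\pi_m$ only), and for sequences $\mathfrak M^{(t)}_{\mathrm u^{(\cdot)},\mathrm v^{(\cdot)}}(X)\equiv1+\max_{\tau\in[0:t]}\sum_{s\in[0:\tau]}\prod_{r\in[s:\tau]}\|I_n-\eta_rM_{\mathrm u^{(r)},\mathrm v^{(r)}}(X)\|_{op}$. $[a:b]=\{a,\dots,b\}$, $\|\eta_{[0:t)}\|_\infty=\max_{0\le s<t}\eta_s$. *)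

(* Defs.v *)
From HB Require Import structures.
From mathcomp Require Import all_boot all_order all_algebra.
From mathcomp Require Import all_classical all_reals all_analysis.
Set Implicit Arguments.
Unset Strict Implicit.
Unset Printing Implicit Defensive.
Import Order.TTheory GRing.Theory Num.Theory.
Import numFieldNormedType.Exports.
Local Open Scope classical_set_scope.
Local Open Scope ring_scope.

Section Defs.
Variable R : realType.

Definition vnorm (k : nat) (v : 'cV[R]_k) : R :=
  Num.sqrt (\sum_(i < k) (v i 0) ^+ 2).

Definition opnorm (k : nat) (A : 'M[R]_k) : R :=
  sup [set vnorm (A *m v) | v in [set v : 'cV[R]_k | vnorm v <= 1]].

Definition Sfrak (L : R -> R -> R) (F : R -> R -> R) (x0 z0 xi0 : R) : R :=
  derive1 (fun x => L x (F z0 xi0)) x0.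

Definition dSfrak (L : R -> R -> R) (F : R -> R -> R) (x0 z0 xi0 : R) : R :=
  derive1 (fun x => Sfrak L F x z0 xi0) x0.

Variables (m n : nat) (L F : R -> R -> R) (xi : 'cV[R]_m) (mustar : 'cV[R]_n).

Definition Svec (X : 'M[R]_(m, n)) (mu : 'cV[R]_n) : 'cV[R]_m :=
  \col_i Sfrak L F ((X *m mu) i 0) ((X *m mustar) i 0) (xi i 0).

(* the empirical gradient (1/m) X^T frak S(X mu, X mu_*, xi), without the 1/m *)
Definition grad (X : 'M[R]_(m, n)) (mu : 'cV[R]_n) : 'cV[R]_n :=
  X^T *m Svec X mu.

Fixpoint gd (eta : nat -> R) (mu0 : 'cV[R]_n) (X : 'M[R]_(m, n)) (t : nat)
  : 'cV[R]_n :=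
  match t with
  | 0%N => mu0
  | t'.+1 => gd eta mu0 X t' - (eta t' / m%:R) *: grad X (gd eta mu0 X t')
  end.

Variables (d : measure_display) (Omega : measurableType d)
  (P : probability Omega R).

Definition Evec (k : nat) (f : Omega -> 'cV[R]_k) : 'cV[R]_k :=
  \col_i fine ('E_P[fun w => f w i 0]).

Fixpoint tgd (eta : nat -> R) (mu0 : 'cV[R]_n) (X : Omega -> 'M[R]_(m, n))
  (t : nat) : 'cV[R]_n :=
  match t with
  | 0%N => mu0
  | t'.+1 => tgd eta mu0 X t'
       - (eta t' / m%:R) *: Evec (fun w => grad (X w) (tgd eta mu0 X t'))
  end.

Definition DeltaX (eta : nat -> R) (mu0 : 'cV[R]_n) (X : Omega -> 'M[R]_(m, n))
  (w : Omega) (t : nat) : 'cV[R]_n :=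
  m%:R^-1 *: (grad (X w) (tgd eta mu0 X t)
               - Evec (fun w' => grad (X w') (tgd eta mu0 X t))).

End Defs.

(* M_{u,v}(X) = E_{U,pi_m} d1S(<X_pi, U u + (1-U) v>, <X_pi, mu_*>, xi_pi) X_pi X_pi^T,
   U ~ Unif[0,1], pi_m ~ Unif{1..m} *)
Definition Mmat (R : realType) (m n : nat) (L F : R -> R -> R) (xi : 'cV[R]_m)
  (mustar : 'cV[R]_n) (X : 'M[R]_(m, n)) (u v : 'cV[R]_n) : 'M[R]_n :=
  m%:R^-1 *: \sum_(i < m)
    ((\int[@lebesgue_measure R]_(U in `[0%R, 1%R])
        dSfrak L F ((X *m (U *: u + (1 - U) *: v)) i 0) ((X *m mustar) i 0)
          (xi i 0))
     *: ((row i X)^T *m row i X)).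

Definition Mfrak (R : realType) (n : nat) (eta : nat -> R)
  (M : nat -> 'M[R]_n) (t : nat) : R :=
  1 + \big[Num.max/0]_(tau < t.+1)
        \sum_(0 <= s < tau.+1) \prod_(s <= r < tau.+1)
           opnorm (1%:M - eta r *: M r).

Definition etamax (R : realType) (eta : nat -> R) (t : nat) : R :=
  \big[Num.max/0]_(s < t) eta s.

(* Main.v *)
Require Import Defs.
From HB Require Import structures.
From mathcomp Require Import all_boot all_order all_algebra.
From mathcomp Require Import all_classical all_reals all_analysis.
From mathcomp Require Import ring lra.
Import Order.TTheory GRing.Theory Num.Theory.
Import numFieldNormedType.Exports.
Local Open Scope classical_set_scope.
Local Open Scope ring_scope.

Section Helpers.
Variable R : realType.
Set Implicit Arguments.
Lemma sum_prod (k : nat) (f g : 'I_k -> R) :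
  \sum_i \sum_j f i * g j = (\sum_i f i) * (\sum_j g j).
Proof. by rewrite mulr_suml; apply: eq_bigr => i _; rewrite mulr_sumr. Qed.

Lemma CS (k : nat) (a b : 'I_k -> R) :
  (\sum_i a i * b i) ^+ 2 <= (\sum_i a i ^+ 2) * (\sum_i b i ^+ 2).
Proof.
have H : 0 <= \sum_i \sum_j (a i * b j - a j * b i) ^+ 2.
  by apply: sumr_ge0 => i _; apply: sumr_ge0 => j _; exact: sqr_ge0.
have E : \sum_i \sum_j (a i * b j - a j * b i) ^+ 2 =
   \sum_i \sum_j (a i ^+ 2 * b j ^+ 2) + \sum_i \sum_j (b i ^+ 2 * a j ^+ 2)
   - 2 * \sum_i \sum_j ((a i * b i) * (a j * b j)).
  rewrite mulr_sumr -!big_split -sumrB; apply: eq_bigr => i _.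
  rewrite mulr_sumr -!big_split -sumrB; apply: eq_bigr => j _.
  by rewrite /=; ring.
move: H; rewrite E !sum_prod => H.
rewrite expr2; nra.
Qed.

Lemma sumsq_ge0 (k : nat) (v : 'cV[R]_k) : 0 <= \sum_i v i 0 ^+ 2.
Proof. by apply: sumr_ge0 => i _; exact: sqr_ge0. Qed.

Lemma vnorm_ge0 (k : nat) (v : 'cV[R]_k) : 0 <= vnorm v.
Proof. exact: sqrtr_ge0. Qed.

Lemma vnorm_sq (k : nat) (v : 'cV[R]_k) : vnorm v ^+ 2 = \sum_i v i 0 ^+ 2.
Proof. by rewrite /vnorm sqr_sqrtr // sumsq_ge0. Qed.

Lemma vnorm0 (k : nat) : vnorm (0 : 'cV[R]_k) = 0.
Proof.
rewrite /vnorm (eq_bigr (fun _ => 0)) ?big1 ?sqrtr0 // => i _.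
by rewrite mxE expr0n.
Qed.

Lemma vnormZ (k : nat) (c : R) (v : 'cV[R]_k) : vnorm (c *: v) = `|c| * vnorm v.
Proof.
rewrite /vnorm (eq_bigr (fun i => c ^+ 2 * v i 0 ^+ 2)); last first.
  by move=> i _; rewrite mxE exprMn.
by rewrite -mulr_sumr sqrtrM ?sqr_ge0 // sqrtr_sqr.
Qed.

Lemma vnormN (k : nat) (v : 'cV[R]_k) : vnorm (- v) = vnorm v.
Proof. by rewrite -scaleN1r vnormZ normrN normr1 mul1r. Qed.

Lemma vnormD (k : nat) (u v : 'cV[R]_k) : vnorm (u + v) <= vnorm u + vnorm v.
Proof.
have cs := CS (fun i => u i 0) (fun i => v i 0).
have hu := vnorm_ge0 u; have hv := vnorm_ge0 v.
have H : vnorm (u + v) ^+ 2 <= (vnorm u + vnorm v) ^+ 2.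
  rewrite vnorm_sq (eq_bigr (fun i => u i 0 ^+ 2 + v i 0 ^+ 2 + 2 * (u i 0 * v i 0))); last first.
    by move=> i _; rewrite mxE; ring.
  rewrite !big_split /= -mulr_sumr -!vnorm_sq.
  rewrite -!vnorm_sq in cs.
  set s := \sum_i _ in cs *.
  have : s <= vnorm u * vnorm v.
    have h2 : s ^+ 2 <= (vnorm u * vnorm v) ^+ 2 by rewrite exprMn.
    have h3 : 0 <= vnorm u * vnorm v by exact: mulr_ge0.
    nra.
  nra.
have := vnorm_ge0 (u + v); nra.
Qed.

Lemma vnormB (k : nat) (u v : 'cV[R]_k) : vnorm (u - v) <= vnorm u + vnorm v.
Proof. by have := vnormD u (- v); rewrite vnormN. Qed.


Lemma frob_bound (k : nat) (A : 'M[R]_k) (v : 'cV[R]_k) :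
  vnorm (A *m v) <= Num.sqrt (\sum_i \sum_j A i j ^+ 2) * vnorm v.
Proof.
have h1 := vnorm_ge0 (A *m v).
have h2 : 0 <= Num.sqrt (\sum_i \sum_j A i j ^+ 2) * vnorm v.
  by apply: mulr_ge0; [exact: sqrtr_ge0|exact: vnorm_ge0].
have h3 : vnorm (A *m v) ^+ 2 <= (Num.sqrt (\sum_i \sum_j A i j ^+ 2) * vnorm v) ^+ 2.
  have hs : 0 <= \sum_i \sum_j A i j ^+ 2.
    by apply: sumr_ge0 => i _; apply: sumr_ge0 => j _; exact: sqr_ge0.
  rewrite vnorm_sq exprMn vnorm_sq sqr_sqrtr // mulr_suml; apply: ler_sum => i _.
  rewrite mxE; exact: (CS (fun j => A i j) (fun j => v j 0)).
nra.
Qed.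

Lemma opnorm_hassup (k : nat) (A : 'M[R]_k) :
  has_sup [set vnorm (A *m v) | v in [set v : 'cV[R]_k | vnorm v <= 1]].
Proof.
split.
  exists (vnorm (A *m 0)); exists 0 => //=.
  by rewrite vnorm0.
exists (Num.sqrt (\sum_i \sum_j A i j ^+ 2)) => y [v /= hv <-].
apply: le_trans (frob_bound A v) _.
rewrite -[X in _ <= X]mulr1; apply: ler_wpM2l => //; exact: sqrtr_ge0.
Qed.

Lemma opnorm_ge0 (k : nat) (A : 'M[R]_k) : 0 <= opnorm A.
Proof.
have H : [set vnorm (A *m v) | v in [set v : 'cV[R]_k | vnorm v <= 1]] (vnorm (A *m 0)).
  by exists 0 => //=; rewrite vnorm0.
by have := sup_upper_bound (opnorm_hassup A) H; rewrite mulmx0 vnorm0.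
Qed.

Lemma opnorm_bound (k : nat) (A : 'M[R]_k) (v : 'cV[R]_k) :
  vnorm (A *m v) <= opnorm A * vnorm v.
Proof.
have h0 := vnorm_ge0 v.
have hop := opnorm_ge0 A.
have [hz|hp] := eqVneq (vnorm v) 0.
  have := frob_bound A v; rewrite hz !mulr0 => h.
  by have := vnorm_ge0 (A *m v); lra.
have hp' : 0 < vnorm v by rewrite lt_def hp h0.
set c := (vnorm v)^-1.
have hc : c * vnorm v = 1 by rewrite mulVf.
have hc0 : 0 < c by rewrite invr_gt0.
have H0 : [set vnorm (A *m v) | v in [set v : 'cV[R]_k | vnorm v <= 1]] (vnorm (A *m (c *: v))).
  exists (c *: v) => //=.
  by rewrite vnormZ gtr0_norm // hc.
have H : vnorm (A *m (c *: v)) <= opnorm A := sup_upper_bound (opnorm_hassup A) H0.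
move: H; rewrite -scalemxAr vnormZ gtr0_norm // => H.
have := vnorm_ge0 (A *m v); nra.
Qed.

Lemma scalar_ftc (g : R -> R) (a b : R) :
  (forall x, derivable g x 1) -> continuous (derive1 g) ->
  g a - g b = (\int[@lebesgue_measure R]_(U in `[0%R, 1%R]) (derive1 g) (U * (a - b) + b)) * (a - b).
Proof.
move=> dg cg.
pose inner := fun V : R => V * (a - b) + b.
have di : forall U : R, is_derive U 1 inner (a - b).
  move=> U.
  have -> : inner = ((a-b) \*: id + cst b) by apply/funext => V; rewrite /inner /= mulrC.
  have := is_deriveD (is_deriveZ (a-b) (is_derive_id U (1:R))) (is_derive_cst b U (1:R)).
  by rewrite addr0 /= -[X in is_derive _ _ _ X -> _]/((a - b) * 1) mulr1.
have dF : forall U : R, is_derive U 1 (g \o inner) ((derive1 g) (inner U) * (a - b)).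
  move=> U; apply: is_derive1_comp => //.
  rewrite derive1E; exact: derivableP.
have ci : continuous inner.
  move=> U; apply: differentiable_continuous; rewrite -derivable1_diffP.
  exact: ex_derive.
have cf : continuous (fun U => (derive1 g) (inner U) * (a - b)).
  move=> U; apply: (@continuousM _ _ (fun U => derive1 g (inner U)) (fun=> a - b)); last exact: cst_continuous.
  by apply: continuous_comp; [exact: ci|exact: cg].
have := @continuous_FTC2 R (fun U => (derive1 g) (inner U) * (a - b)) (g \o inner) 0 1 ltr01.
have dd : forall U : R, derivable (g \o inner) U 1.
  by move=> U; have := dF U => ?; exact: ex_derive.
have cF : continuous (g \o inner).
  move=> U; apply: differentiable_continuous; rewrite -derivable1_diffP.
  exact: dd.
move=> /(_ (continuous_subspaceT cf)) H.
move: H => /(_ (And3 (fun U _ => dd U) (cvg_at_right_filter (cF 0)) (cvg_at_left_filter (cF 1)))).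
move=> /(_ (fun U _ => (eq_trans (derive1E _ _) (@derive_val _ _ _ _ _ _ _ (dF U))))) H.
rewrite mulrC -RintegralZl //; last first.
  apply: continuous_compact_integrable; first exact: segment_compact.
  apply: continuous_subspaceT => U.
  by apply: continuous_comp; [exact: ci|exact: cg].
rewrite /Rintegral.
have -> : (\int[lebesgue_measure]_(x in `[0%R, 1%R]) ((a - b) * derive1 g (x * (a - b) + b))%:E)%E
   = (\int[lebesgue_measure]_(x in `[0%R, 1%R]) (derive1 g (inner x) * (a - b))%:E)%E.
  by apply: eq_integral => x _; rewrite mulrC.
by rewrite H /= /inner mul1r mul0r add0r subrK.
Qed.

Lemma grad_diff m n (L F : R -> R -> R) (xi : 'cV[R]_m) (mustar : 'cV[R]_n)
  (X : 'M[R]_(m, n)) (u v : 'cV[R]_n) : (0 < m)%N ->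
  (forall (i : 'I_m) z x, derivable (fun x0 => Sfrak L F x0 z (xi i 0)) x 1) ->
  (forall (i : 'I_m) z, continuous (fun x0 => dSfrak L F x0 z (xi i 0))) ->
  grad L F xi mustar X u - grad L F xi mustar X v
  = m%:R *: (Mmat L F xi mustar X u v *m (u - v)).
Proof.
move=> Hm dS cS.
have m0 : (m%:R : R) != 0 by rewrite pnatr_eq0 -lt0n.
rewrite /Mmat -scalemxAl scalerA mulfV // scale1r mulmx_suml /grad -mulmxBr.
apply/matrixP => j k; rewrite (ord1 k) !mxE summxE.
apply: eq_bigr => i _.
rewrite -scalemxAl -mulmxA !mxE.
set z := \sum_j0 X i j0 * mustar j0 0.
set a := \sum_j0 X i j0 * u j0 0.
set b := \sum_j0 X i j0 * v j0 0.
have hab : forall U : R, (X *m (U *: u + (1 - U) *: v)) i 0 = U * (a - b) + b.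
  move=> U; rewrite mxE /a /b mulrBr !mulr_sumr -sumrB -big_split /=.
  by apply: eq_bigr => l _; rewrite !mxE; ring.
have hd : (\sum_j0 (row i X)^T j j0 * (row i X *m (u - v)) j0 0) = X i j * (a - b).
  rewrite big_ord1 !mxE /a /b -sumrB; congr (_ * _); apply: eq_bigr => l _.
  by rewrite !mxE mulrBr.
rewrite hd.
have -> : (fun U : R => dSfrak L F ((X *m (U *: u + (1 - U) *: v)) i 0) z (xi i 0))
   = (fun U : R => derive1 (fun x => Sfrak L F x z (xi i 0)) (U * (a - b) + b)).
  by apply/funext => U; rewrite hab.
rewrite (scalar_ftc (g := fun x => Sfrak L F x z (xi i 0)) a b (dS i z) (cS i z)).
ring.
Qed.

Fixpoint Bs (a : nat -> R) (t : nat) : R :=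
  match t with 0%N => 0 | t'.+1 => a t' * Bs a t' + 1 end.

Definition Cs (a : nat -> R) (t : nat) : R :=
  \sum_(0 <= s < t.+1) \prod_(s <= r < t.+1) a r.

Lemma Cs_rec (a : nat -> R) t : Cs a t.+1 = a t.+1 * (1 + Cs a t).
Proof.
rewrite /Cs big_nat_recr //= big_nat1.
have -> : \sum_(0 <= s < t.+1) \prod_(s <= r < t.+2) a r
        = \sum_(0 <= s < t.+1) ((\prod_(s <= r < t.+1) a r) * a t.+1).
  apply: eq_big_nat => s /andP[_ hs]; rewrite big_nat_recr //=; exact: ltnW.
by rewrite -big_distrl /=; ring.
Qed.

Lemma Bs_ge0 (a : nat -> R) : (forall r, 0 <= a r) -> forall t, 0 <= Bs a t.
Proof.
move=> a0; elim => [|t IH] //=.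
by apply: addr_ge0 => //; apply: mulr_ge0.
Qed.

Lemma Cs_ge0 (a : nat -> R) : (forall r, 0 <= a r) -> forall t, 0 <= Cs a t.
Proof.
move=> a0 t; apply: sumr_ge0 => s _; apply: prodr_ge0 => r _; exact: a0.
Qed.

Lemma Bs_Cs (a : nat -> R) : (forall r, 0 <= a r) -> forall t, Bs a t.+1 <= 1 + Cs a t.
Proof.
move=> a0; elim => [|t IH].
  rewrite /= mulr0 add0r; have := @Cs_ge0 a a0 0; lra.
have -> : Bs a t.+2 = a t.+1 * Bs a t.+1 + 1 by [].
rewrite Cs_rec.
have := a0 t.+1; set B := Bs a t.+1 in IH *; set c := Cs a t in IH *.
move=> h; nra.
Qed.

Lemma bigmax_ge0 (F : nat -> R) t : 0 <= \big[Num.max/0]_(i < t) F i.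
Proof. exact: bigmax_ge_id. Qed.
Lemma bigmax_mono (F : nat -> R) t :
  \big[Num.max/0]_(i < t) F i <= \big[Num.max/0]_(i < t.+1) F i.
Proof. exact: (@le_bigmax_ord _ _ 0 t t.+1 xpredT F (leqnSn t)). Qed.
Lemma bigmax_last (F : nat -> R) t : F t <= \big[Num.max/0]_(i < t.+1) F i.
Proof. exact: (le_bigmax 0 (fun i : 'I_t.+1 => F i) ord_max). Qed.

Lemma main_bound n (eta : nat -> R) (e Dl : nat -> 'cV[R]_n) (Ms : nat -> 'M[R]_n) :
  (forall s, 0 < eta s) -> e 0%N = 0 ->
  (forall r, e r.+1 = (1%:M - eta r *: Ms r) *m e r - eta r *: Dl r) ->
  forall t, (1 <= t)%N ->
  vnorm (e t) <= etamax eta t * Mfrak eta Ms (t - 1)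
                 * \big[Num.max/0]_(s < t) vnorm (Dl s).
Proof.
move=> Heta e0 He.
pose a := fun r => opnorm (1%:M - eta r *: Ms r).
have a0 : forall r, 0 <= a r by move=> r; exact: opnorm_ge0.
have key : forall t, vnorm (e t) <=
    etamax eta t * \big[Num.max/0]_(s < t) vnorm (Dl s) * Bs a t.
  elim => [|t IH]; first by rewrite e0 vnorm0 /= mulr0.
  rewrite He.
  have h1 := vnormB ((1%:M - eta t *: Ms t) *m e t) (eta t *: Dl t).
  have h2 := opnorm_bound (1%:M - eta t *: Ms t) (e t).
  rewrite vnormZ gtr0_norm // in h1.
  have hE : etamax eta t <= etamax eta t.+1 := bigmax_mono eta t.
  have hEt : eta t <= etamax eta t.+1 := bigmax_last eta t.
  have hD : \big[Num.max/0]_(s < t) vnorm (Dl s) <= \big[Num.max/0]_(s < t.+1) vnorm (Dl s)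
    := bigmax_mono (fun s => vnorm (Dl s)) t.
  have hDt : vnorm (Dl t) <= \big[Num.max/0]_(s < t.+1) vnorm (Dl s)
    := bigmax_last (fun s => vnorm (Dl s)) t.
  have hE0 : 0 <= etamax eta t := bigmax_ge0 eta t.
  have hD0 : 0 <= \big[Num.max/0]_(s < t) vnorm (Dl s) := bigmax_ge0 (fun s => vnorm (Dl s)) t.
  have hB := @Bs_ge0 a a0 t.
  have ha := a0 t.
  have hvD := vnorm_ge0 (Dl t).
  have hve := vnorm_ge0 (e t).
  have het := ltW (Heta t).
  have -> : Bs a t.+1 = a t * Bs a t + 1 by [].
  move: IH h1 h2 hE hEt hD hDt hE0 hD0 hB ha hvD hve het.
  rewrite -/(a t).
  set E0 := etamax eta t; set E1 := etamax eta t.+1.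
  set D0 := \big[Num.max/0]_(s < t) _; set D1 := \big[Num.max/0]_(s < t.+1) _.
  set B := Bs a t; set at_ := a t.
  set v1 := vnorm (e t); set v2 := vnorm (Dl t); set v3 := vnorm (_ - _).
  set v4 := vnorm (_ *m e t).
  move=> IH h1 h2 hE hEt hD hDt hE0 hD0 hB ha hvD hve het.
  have P01 : E0 * D0 <= E1 * D1 by apply: ler_pM.
  have P0 : 0 <= E0 * D0 by apply: mulr_ge0.
  have Q : eta t * v2 <= E1 * D1 by apply: ler_pM.
  have aB : 0 <= at_ * B by apply: mulr_ge0.
  have X1 : at_ * v1 <= at_ * (E0 * D0 * B) by exact: (ler_wpM2l ha IH).
  have X2 : at_ * B * (E0 * D0) <= at_ * B * (E1 * D1) by exact: (ler_wpM2l aB P01).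
  nra.
move=> t Ht; have := key t.
case: t Ht => // t _; rewrite subSS subn0.
have hB := @Bs_Cs a a0 t.
have hC : Cs a t <= \big[Num.max/0]_(tau < t.+1) Cs a tau
  := bigmax_last (Cs a) t.
have hM : Bs a t.+1 <= Mfrak eta Ms t.
  rewrite /Mfrak; apply: le_trans hB _; rewrite lerD2l; exact: hC.
have hE0 : 0 <= etamax eta t.+1 := bigmax_ge0 eta t.+1.
have hD0 : 0 <= \big[Num.max/0]_(s < t.+1) vnorm (Dl s) := bigmax_ge0 (fun s => vnorm (Dl s)) t.+1.
move=> H; apply: le_trans H _.
have h := ler_wpM2l (mulr_ge0 hE0 hD0) hM.
move: h; set x := etamax eta t.+1; set y := \big[Num.max/0]_(s < t.+1) _.
set z := Bs a t.+1; set w := Mfrak eta Ms t.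
move=> h; lra.
Qed.

Lemma step_identity n m (gr tr Gr Gt Ev Dr : 'cV[R]_n) (Mr : 'M[R]_n) (et : R) :
  (m%:R : R) != 0 -> Gr - Gt = m%:R *: (Mr *m (gr - tr)) ->
  Dr = m%:R^-1 *: (Gt - Ev) ->
  (gr - (et / m%:R) *: Gr) - (tr - (et / m%:R) *: Ev)
  = (1%:M - et *: Mr) *m (gr - tr) - et *: Dr.
Proof.
move=> m0 hG ->.
rewrite mulmxBl mul1mx -scalemxAl.
move: hG; set x := Mr *m (gr - tr) => hG.
have -> : Gr = Gt + m%:R *: x by rewrite -hG addrCA subrr addr0.
apply/matrixP => i j; rewrite !mxE.
by field.
Qed.
End Helpers.

Theorem mainTheorem10 (R : realType) (m n : nat) (Hm : (0 < m)%N) (Hn : (0 < n)%N)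
  (L F : R -> R -> R) (xi : 'cV[R]_m) (mustar mu0 : 'cV[R]_n)
  (eta : nat -> R) (Heta : forall s, 0 < eta s)
  (d : measure_display) (Omega : measurableType d) (P : probability Omega R)
  (X : Omega -> 'M[R]_(m, n)) :
  (* L is differentiable in its first argument where frak S is used *)
  (forall (i : 'I_m) z x, derivable (fun x0 => L x0 (F z (xi i 0))) x 1) ->
  (* x |-> frak S(x, z, xi_i) is continuously differentiable *)
  (forall (i : 'I_m) z x, derivable (fun x0 => Sfrak L F x0 z (xi i 0)) x 1) ->
  (forall (i : 'I_m) z, continuous (fun x0 => dSfrak L F x0 z (xi i 0))) ->
  (* the expectations defining the theoretical iterates are finite *)
  (forall t (j : 'I_n), P.-integrable setT
      (fun w => ((grad L F xi mustar (X w) (tgd L F xi mustar P eta mu0 X t)) j 0)%:E)) ->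
  forall (w : Omega) (t : nat), (1 <= t)%N ->
  vnorm (gd L F xi mustar eta mu0 (X w) t - tgd L F xi mustar P eta mu0 X t)
  <= etamax eta t
     * Mfrak eta (fun r => Mmat L F xi mustar (X w)
                     (gd L F xi mustar eta mu0 (X w) r)
                     (tgd L F xi mustar P eta mu0 X r)) (t - 1)
     * \big[Num.max/0]_(s < t) vnorm (DeltaX L F xi mustar P eta mu0 X w s).
Proof.
move=> _ dS cS _ w t Ht.
have m0 : (m%:R : R) != 0 by rewrite pnatr_eq0 -lt0n.
apply: (@main_bound R n eta
   (fun r => gd L F xi mustar eta mu0 (X w) r - tgd L F xi mustar P eta mu0 X r)
   (fun r => DeltaX L F xi mustar P eta mu0 X w r)
   (fun r => Mmat L F xi mustar (X w) (gd L F xi mustar eta mu0 (X w) r)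
                 (tgd L F xi mustar P eta mu0 X r)) Heta _ _ t Ht).
  by rewrite /= subrr.
move=> r.
apply: (@step_identity R n m _ _ _ (grad L F xi mustar (X w) (tgd L F xi mustar P eta mu0 X r))
          (Evec P (fun w' => grad L F xi mustar (X w') (tgd L F xi mustar P eta mu0 X r)))) => //.
exact: grad_diff.
Qed.
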